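(* Let $G=(V,E)$ be an undirected graph with degree bounds $b_v\in\mathbb{R}^+\cup\{\infty\}$, and let $(s_1,t_1),\dots,(s_m,t_m)$ be a demand sequence whose endpoints are distinct vertices, each of degree one in $G$ and with degree bound $\infty$. Fix an optimal offline solution $H^*$ (a subgraph connecting every demand pair and minimizing $\max_v\ell_{H^*}(v)=\mathrm{OPT}$), and let $\Delta>0$ be the minimum degree bound of a vertex with non-zero degree in $H^*$. Run the greedy algorithm GA (described in the context), let $H_{\mathrm{GA}}$ be its final output and $\tau_i$ the arrival threshold of demand $i$. For $r>0$ let $\Gamma_\Delta(r)=\{v\in V:\ \ell^+_{H_{\mathrm{GA}}}(v)\ge r\text{ and } b_v\ge\Delta\}$, $D(r)=\{i:\tau_i\ge r\}$, and $b(\Gamma_\Delta(r))=\sum_{v\in\Gamma_\Delta(r)}b_v$. Then for every $r>0$, $$\frac{|D(r)|}{b(\Gamma_\Delta(r))}\le \mathrm{OPT}.$$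
   Context: For a subgraph $H\subseteq G$, $\deg_H(v)$ is the degree of $v$ in $H$, $\ell_H(v)=\deg_H(v)/b_v$ is its load, and $\ell^+_H(v)=\ell_H(v)+2/b_v$ its uptick load. Greedy algorithm GA: start with $H=\emptyset$. An edge $(u,v)$ of $G$ is an extension edge w.r.t. $H$ if $u$ and $v$ are not connected in $H$. For an $(s,t)$-path $P$ in $G$, its extension part $P^*$ is the set of its extension edges, and $\ell^+_H(P^* )=\max_{v\in V(P^* )}\ell^+_H(v)$ with $V(P^* )$ the endpoints of edges of $P^*$. On arrival of demand $(s_i,t_i)$, with $H$ the current edge set, GA chooses an $(s_i,t_i)$-path $P_i$ minimizing $\ell^+_H(P_i^* )$, breaking ties in favor of fewer edges; the arrival threshold is $\tau_i=\ell^+_H(P_i^* )$; then it sets $H\leftarrow H\cup P_i^*$. *)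

(* Defs.v *)
From HB Require Import structures.
From mathcomp Require Import all_boot all_order all_algebra.
Set Implicit Arguments. Unset Strict Implicit. Unset Printing Implicit Defensive.
Import Order.TTheory GRing.Theory Num.Theory.
Local Open Scope ring_scope.

Section Defs.
Variable R : realFieldType.
Variable V : finType.

(* A graph / subgraph is a set of edges; an edge is a 2-element vertex set.
   Degree bounds: [b v = Some c] is the finite bound c > 0, [None] is infinity. *)
Definition edges := {set {set V}}.
Definition bounds := V -> option R.

Definition adj (H : edges) : rel V := fun x y => [set x; y] \in H.
Definition connected (H : edges) (u v : V) : bool := connect (adj H) u v.

Definition deg (H : edges) (v : V) : nat := #|[set e in H | v \in e]|.

Definition load (b : bounds) (H : edges) (v : V) : R :=
  match b v with Some c => (deg H v)%:R / c | None => 0 end.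
Definition uload (b : bounds) (H : edges) (v : V) : R :=
  match b v with Some c => (deg H v)%:R / c + 2 / c | None => 0 end.

Definition is_path (E : edges) (s t : V) (p : seq V) : bool :=
  [&& path (adj E) s p, last s p == t & uniq (s :: p)].

Definition ext_pairs (H : edges) (s : V) (p : seq V) : seq (V * V) :=
  [seq xy <- zip (s :: p) p | ~~ connected H xy.1 xy.2].
Definition Pstar (H : edges) (s : V) (p : seq V) : edges :=
  [set e | has (fun xy => e == [set xy.1; xy.2]) (ext_pairs H s p)].
Definition VPstar (H : edges) (s : V) (p : seq V) : {set V} :=
  [set v | has (fun xy => (v == xy.1) || (v == xy.2)) (ext_pairs H s p)].
Definition thr (b : bounds) (H : edges) (s : V) (p : seq V) : R :=
  \big[Num.max/0]_(v in VPstar H s p) uload b H v.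

Definition greedy_choice (E : edges) (b : bounds) (H : edges) (s t : V) (p : seq V) : Prop :=
  is_path E s t p /\
  forall q, is_path E s t q ->
    thr b H s p < thr b H s q \/ (thr b H s p = thr b H s q /\ (size p <= size q)%N).

Fixpoint GA_run_from (E : edges) (b : bounds) (H : edges)
    (dem : seq (V * V)) (ps : seq (seq V)) : Prop :=
  match dem, ps with
  | [::], [::] => True
  | d :: dem', p :: ps' =>
      greedy_choice E b H d.1 d.2 p /\ GA_run_from E b (H :|: Pstar H d.1 p) dem' ps'
  | _, _ => False
  end.
Definition GA_run E b dem ps := GA_run_from E b set0 dem ps.

Fixpoint taus_from (b : bounds) (H : edges) (dem : seq (V * V)) (ps : seq (seq V)) : seq R :=
  match dem, ps with
  | d :: dem', p :: ps' => thr b H d.1 p :: taus_from b (H :|: Pstar H d.1 p) dem' ps'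
  | _, _ => [::]
  end.
Definition taus b dem ps := taus_from b set0 dem ps.

Fixpoint final_from (H : edges) (dem : seq (V * V)) (ps : seq (seq V)) : edges :=
  match dem, ps with
  | d :: dem', p :: ps' => final_from (H :|: Pstar H d.1 p) dem' ps'
  | _, _ => H
  end.
Definition H_GA dem ps := final_from set0 dem ps.

Definition feasible (E : edges) (dem : seq (V * V)) (H : edges) : Prop :=
  H \subset E /\ forall d, d \in dem -> connected H d.1 d.2.
Definition maxload (b : bounds) (H : edges) : R := \big[Num.max/0]_v load b H v.
Definition optimal (E : edges) (b : bounds) (dem : seq (V * V)) (H : edges) : Prop :=
  feasible E dem H /\ forall H', feasible E dem H' -> maxload b H <= maxload b H'.

Definition le_ext (x y : option R) : bool :=
  match x, y with
  | _, None => true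
  | None, Some _ => false
  | Some a, Some c => a <= c
  end.
Definition min_ext (x y : option R) : option R := if le_ext x y then x else y.

Definition Delta (b : bounds) (Hs : edges) : option R :=
  \big[min_ext/None]_(v | (0 < deg Hs v)%N) b v.

Definition Gamma (b : bounds) (Hs HG : edges) (r : R) : {set V} :=
  [set v | (r <= uload b HG v) && le_ext (Delta b Hs) (b v)].
Definition bval (b : bounds) (v : V) : R := if b v is Some c then c else 0.
End Defs.

(* Main.v *)
Require Import Defs.
From mathcomp Require Import all_boot all_order all_algebra.
Import Order.TTheory GRing.Theory Num.Theory.
Set Implicit Arguments. Unset Strict Implicit. Unset Printing Implicit Defensive.
Local Open Scope ring_scope.

Section Kappa.
Variable V : finType.
Implicit Types e f : rel V.

Definition cls e (x : V) : {set V} := [set y | e x y].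
Definition kappa e := #|[set cls e x | x : V]|.
Definition eqv e := [/\ reflexive e, symmetric e & transitive e].

Lemma cls_eq e x y : eqv e -> e x y -> cls e x = cls e y.
Proof.
case=> hr hs ht hxy; apply/setP => z; rewrite !inE; apply/idP/idP => h.
- by apply: ht h; rewrite hs.
- exact: ht h.
Qed.

Arguments cls_eq {e x y}.
Lemma kappa_mono e f : eqv e -> eqv f -> subrel e f -> (kappa f <= kappa e)%N.
Proof.
move=> he hf sef.
pose g (C : {set V}) := if [pick z in C] is Some z then cls f z else set0.
have gE x : g (cls e x) = cls f x.
  rewrite /g; case: pickP => [z|].
    rewrite inE => hz; apply/esym/cls_eq => //; exact: sef.
  by move/(_ x); rewrite inE; case: he => -> .
rewrite /kappa; have -> : [set cls f x | x : V] = [set g x | x in [set cls e x | x : V]].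
  by rewrite -imset_comp; apply: eq_imset => x /=; rewrite gE.
exact: leq_imset_card.
Qed.

Definition join e (x y : V) : rel V :=
  fun u v => e u v || ((e u x || e u y) && (e v x || e v y)).

Lemma join_eqv e x y : eqv e -> eqv (join e x y).
Proof.
case=> hr hs ht; split.
- by move=> u; rewrite /join hr.
- by move=> u v; rewrite /join hs andbC.
- have mr u v : e u v -> (e v x || e v y) -> (e u x || e u y).
    by move=> huv /orP[h|h]; apply/orP; [left|right]; apply: ht h.
  move=> v u w /orP[h1|/andP[m1 m2]] /orP[h2|/andP[m3 m4]]; rewrite /join.
  + by rewrite (ht _ _ _ h1 h2).
  + by rewrite (mr _ _ h1 m3) m4 orbT.
  + by rewrite m1 (mr w v); [rewrite orbT| rewrite hs| ].
  + by rewrite m1 m4 orbT.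
Qed.

Lemma cls_join e x y z : eqv e ->
  cls (join e x y) z = if e z x || e z y then cls e x :|: cls e y else cls e z.
Proof.
move=> he; have [hr hs ht] := he.
case: ifP => hm; apply/setP => w; rewrite !inE /join ?hm /=.
- rewrite (hs x w) (hs y w); case hw: (e w x || e w y); rewrite ?orbT //=.
  rewrite orbF; apply/negbTE/negP => hzw; move/negbT: hw; rewrite negb_or.
  case/andP=> /negP h1 /negP h2.
  by case/orP: hm => h; [apply: h1| apply: h2]; apply: ht h; rewrite hs.
- by rewrite orbF.
Qed.

Lemma join_sub e c x y : eqv c -> subrel e c -> c x y -> subrel (join e x y) c.
Proof.
case=> hr hs ht hec hxy u v /orP[/hec //|/andP[mu mv]].
have hu : c u x.
  case/orP: mu => /hec // h; apply: ht h _; by rewrite hs.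
have hv : c x v.
  case/orP: mv => /hec h; first by rewrite hs.
  by apply: ht hxy _; rewrite hs.
exact: ht hu hv.
Qed.

Lemma kappa_join e x y : eqv e ->
  kappa e = (kappa (join e x y) + (cls e x != cls e y))%N.
Proof.
move=> he; have [hr hs ht] := he.
set A := [set cls e z | z : V].
set S := A :\: [set cls e x; cls e y].
have hB : [set cls e x; cls e y] \subset A.
  by apply/subsetP => C; rewrite !inE => /orP[]/eqP->; apply: imset_f.
have notin : cls e x :|: cls e y \notin S.
  apply/negP; rewrite !inE negb_or => /andP[/andP[n1 _] /imsetP[z _ hz]].
  have : x \in cls e z by rewrite -hz !inE hr.
  rewrite inE => /(cls_eq he) hzx.
  by rewrite hz hzx eqxx in n1.
have hJ : [set cls (join e x y) z | z : V] = (cls e x :|: cls e y) |: S.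
  apply/setP => C; rewrite in_setU1; apply/imsetP/orP.
  - case=> z _ ->; rewrite cls_join //; case: ifP => hm; first by left.
    right; rewrite !inE imset_f // andbT negb_or; apply/andP; split.
    + apply/eqP => h; have : z \in cls e z by rewrite inE hr.
      by rewrite h inE hs => h'; rewrite h' in hm.
    + apply/eqP => h; have : z \in cls e z by rewrite inE hr.
      by rewrite h inE hs => h'; rewrite h' orbT in hm.
  - case=> [/eqP ->|]; first by exists x => //; rewrite cls_join // hr.
    rewrite !inE negb_or => /andP[/andP[n1 n2] /imsetP[z _ hC]].
    exists z => //; rewrite cls_join //; case: ifP => // /orP[] h.
    + by rewrite hC (cls_eq he h) eqxx in n1.
    + by rewrite hC (cls_eq he h) eqxx in n2.
rewrite /kappa hJ cardsU1 notin -(cardsID [set cls e x; cls e y] A).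
rewrite (setIidPr hB) cards2 /S; rewrite add1n addSn addnC.
by case: (cls e x != cls e y).
Qed.

End Kappa.

Section Graph.
Variable V : finType.
Implicit Types (A H : edges V).

Lemma adj_sym A : symmetric (adj A).
Proof. by move=> x y; rewrite /adj setUC. Qed.

Lemma conn_eqv (e : rel V) : symmetric e -> eqv (connect e).
Proof.
move=> hs; split.
- exact: connect0.
- exact: sym_connect_sym.
- exact: connect_trans.
Qed.

Lemma conn_sub_join A x y :
  subrel (connect (adj ([set x; y] |: A))) (join (connect (adj A)) x y).
Proof.
have [hr hs ht] := join_eqv x y (conn_eqv (adj_sym A)).
move=> u v /connectP[p pth ->]; elim: p u pth => [|w p IH] u /=; first by move=> _; apply: hr.
case/andP=> huw /IH h; apply: ht h; move: huw; rewrite /adj in_setU1 => /orP[/eqP he|ha].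
- have hu : u \in [set x; y] by rewrite -he set21.
  have hw : w \in [set x; y] by rewrite -he set22.
  rewrite !inE in hu hw; apply/orP; right.
  by case/orP: hu => /eqP ->; case/orP: hw => /eqP ->; rewrite !connect0 ?orbT.
- by rewrite /join connect1.
Qed.

Lemma kappa_add_edge A x y :
  (kappa (connect (adj A)) <= kappa (connect (adj ([set x; y] |: A))) + 1)%N.
Proof.
have he := conn_eqv (adj_sym A).
rewrite (kappa_join x y he) leq_add //; last by case: (_ != _).
apply: kappa_mono; [exact: conn_eqv (adj_sym _) | exact: join_eqv | exact: conn_sub_join].
Qed.

Lemma kappa_add_edges A (B : edges V) :
  (forall e, e \in B -> exists x y, e = [set x; y]) ->
  (kappa (connect (adj A)) <= kappa (connect (adj (A :|: B))) + #|B|)%N.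
Proof.
move hn : #|B| => n; elim: n B hn => [|n IH] B hn hB.
  by move/eqP: hn; rewrite cards_eq0 => /eqP ->; rewrite setU0 addn0.
have [e eB] : exists e, e \in B.
  by apply/set0Pn; rewrite -card_gt0 hn.
have hn' : #|B :\ e| = n by move: hn; rewrite (cardsD1 e B) eB add1n => -[].
have hB' : forall e', e' \in B :\ e -> exists x y, e' = [set x; y].
  by move=> e'; rewrite inE => /andP[_ /hB].
have := IH (B :\ e) hn' hB'.
have [x [y exy]] := hB e eB.
have := kappa_add_edge (A :|: B :\ e) x y.
have -> : [set x; y] |: (A :|: B :\ e) = A :|: B.
  apply/setP => z; rewrite !inE -exy; case: (z =P e) => [->|]; first by rewrite eB !orbT.
  by rewrite orFb.
move=> h1 h2; apply: leq_trans h2 _; rewrite addnS -addn1 addnAC leq_add2r; exact: h1.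
Qed.
End Graph.

Section GA.
Variable R : realFieldType.
Variable V : finType.
Implicit Types (A H E Hf Y Hs : edges V) (b : bounds R V) (r : R) (s t : V).

Lemma path_zip (e : rel V) s p xy : path e s p -> xy \in zip (s :: p) p -> e xy.1 xy.2.
Proof.
elim: p s => [|y p IH] s //= /andP[hsy hp]; rewrite inE => /orP[/eqP->|] //.
exact: IH.
Qed.

Lemma connect_along (e : rel V) s p :
  (forall xy, xy \in zip (s :: p) p -> connect e xy.1 xy.2) -> connect e s (last s p).
Proof.
elim: p s => [|y p IH] s /= h; first exact: connect0.
apply: connect_trans (h (s, y) _) (IH y _); first by rewrite inE eqxx.
by move=> xy hxy; apply: h; rewrite inE hxy orbT.
Qed.

Lemma ga_connects E H s t p : is_path E s t p -> connected (H :|: Pstar H s p) s t.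
Proof.
case/and3P=> hp /eqP hl _; rewrite /connected -hl; apply: connect_along => xy hxy.
case hc: (connected H xy.1 xy.2).
  apply: connect_sub hc => u v huv; apply: connect1.
  by rewrite /adj in_setU -/(adj H u v) huv.
apply: connect1; rewrite /adj in_setU; apply/orP; right.
rewrite /Pstar inE; apply/hasP; exists xy => //.
by rewrite /ext_pairs mem_filter hc hxy.
Qed.

Lemma Pstar_sub E H s p : path (adj E) s p -> Pstar H s p \subset E.
Proof.
move=> hp; apply/subsetP => e; rewrite inE => /hasP[xy].
rewrite /ext_pairs mem_filter => /andP[_ hxy] /eqP ->.
exact: (path_zip hp hxy).
Qed.

Lemma final_sub H (dem : seq (V * V)) ps : H \subset final_from H dem ps.
Proof.
elim: dem ps H => [|d dem IH] [|p ps] H //=.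
exact: subset_trans (subsetUl _ _) (IH _ _).
Qed.

Lemma deg_mono H H' v : H \subset H' -> (deg H v <= deg H' v)%N.
Proof.
move=> hs; apply: subset_leq_card; apply/subsetP => e; rewrite !inE => /andP[he ->].
by rewrite (subsetP hs _ he).
Qed.

Lemma uload_mono b H H' v : (forall v c, b v = Some c -> 0 < c) ->
  H \subset H' -> uload b H v <= uload b H' v.
Proof.
move=> hpos hs; rewrite /uload; case hb: (b v) => [c|//].
have hc := hpos _ _ hb.
rewrite lerD2r ler_pM2r ?invr_gt0 // ler_nat; exact: deg_mono.
Qed.

Lemma bigmax_lt (I : finType) (P : pred I) (F : I -> R) r :
  0 < r -> (forall i, P i -> F i < r) -> \big[Num.max/0]_(i | P i) F i < r.
Proof.
move=> hr hF; apply: (big_ind (fun x => x < r)) => //.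
by move=> x y hx hy; rewrite gt_max hx hy.
Qed.

Lemma le_bigmax_seq (I : eqType) (s : seq I) (P : pred I) (F : I -> R) j :
  j \in s -> P j -> F j <= \big[Num.max/0]_(i <- s | P i) F i.
Proof.
elim: s => // i s IH; rewrite inE big_cons => /orP[/eqP<-|js] Pj.
  by rewrite Pj le_max lexx.
case: (P i); rewrite ?le_max IH ?orbT //.
Qed.

Lemma low_path E H Y Hf b r s t :
  (forall v c, b v = Some c -> 0 < c) -> 0 < r ->
  H \subset E -> H \subset Hf ->
  (forall x y, adj Y x y -> [/\ adj E x y, uload b Hf x < r & uload b Hf y < r]) ->
  connect (fun x y => adj H x y || adj Y x y) s t ->
  exists q, is_path E s t q /\ thr b H s q < r.
Proof.
move=> hpos hr hHE hHf hY /connectP[p pth ->].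
case: (shortenP pth) => q qpth quniq _.
have hstep xy : xy \in zip (s :: q) q -> ~~ connected H xy.1 xy.2 ->
    uload b H xy.1 < r /\ uload b H xy.2 < r.
  move=> hxy hnc; case/orP: (path_zip qpth hxy) => [ha|ha].
    by rewrite /connected connect1 in hnc.
  case: (hY _ _ ha) => _ h1 h2.
  by split; apply: le_lt_trans (uload_mono _ hpos hHf) _.
exists q; split.
  rewrite /is_path eqxx quniq /= andbT.
  move: qpth; apply: sub_path => x y /orP[ha|ha]; last by case: (hY _ _ ha).
  exact: (subsetP hHE _ ha).
apply: bigmax_lt => // v; rewrite inE => /hasP[xy].
rewrite /ext_pairs mem_filter => /andP[hnc hxy] hv.
case: (hstep xy hxy hnc) => h1 h2.
by case/orP: hv => /eqP ->.
Qed.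

End GA.

Section Main.
Variable R : realFieldType.
Variable V : finType.
Implicit Types (A H E Hf Y Hs : edges V) (b : bounds R V) (r : R) (s t : V).

Lemma main_ind E Hs Hf Y b r :
  (forall v c, b v = Some c -> 0 < c) -> 0 < r ->
  (forall x y, adj Y x y -> [/\ adj E x y, uload b Hf x < r & uload b Hf y < r]) ->
  forall (dem : seq (V * V)) ps H (e : rel V),
  GA_run_from E b H dem ps -> H \subset E -> final_from H dem ps = Hf ->
  eqv e -> (forall u v, e u v -> connect (fun x y => adj H x y || adj Y x y) u v) ->
  (forall u v, e u v -> connect (adj Hs) u v) ->
  (forall d, d \in dem -> connect (adj Hs) d.1 d.2) ->
  (count (fun tau => (r <= tau)%R) (taus_from b H dem ps) + kappa (connect (adj Hs))
     <= kappa e)%N.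
Proof.
move=> hpos hr hY; elim=> [|d dem IH] [|p ps] H e //=.
  move=> _ _ _ he _ heHs _; apply: kappa_mono => //; exact: conn_eqv (@adj_sym _ _).
case=> [[hpath hmin] hrun] hHE hfin he heR heHs hdem.
set H' := H :|: Pstar H d.1 p.
have hHH' : subrel (fun x y => adj H x y || adj Y x y)
                   (connect (fun x y => adj H' x y || adj Y x y)).
  move=> x y /orP[h|h]; apply: connect1; last by rewrite h orbT.
  by rewrite /adj in_setU -/(adj H x y) h.
have hH'E : H' \subset E.
  by rewrite /H' subUset hHE; apply: Pstar_sub; case/and3P: hpath.
have hdem' : forall d', d' \in dem -> connect (adj Hs) d'.1 d'.2.
  by move=> d' hd'; apply: hdem; rewrite inE hd' orbT.
have hRsym : symmetric (fun x y => adj H' x y || adj Y x y).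
  by move=> x y; rewrite !(adj_sym _ x y).
case: (leP r (thr b H d.1 p)) => hthr /=; last first.
  apply: IH => //.
  by move=> u v /heR; apply: connect_sub.
have hnst : ~~ e d.1 d.2.
  apply/negP => hst.
  have hHf : H \subset Hf by rewrite -hfin; exact: subset_trans (subsetUl _ _) (final_sub _ _ _).
  have [q [hq hqr]] := low_path hpos hr hHE hHf hY (heR _ _ hst).
  case: (hmin q hq) => [h|[h _]]; move: hthr; rewrite leNgt => /negP; apply.
    exact: lt_trans h hqr.
  by rewrite h.
have hne : cls e d.1 != cls e d.2.
  apply/negP => /eqP hc; move: hnst; have [r0 _ _] := he.
  have : d.2 \in cls e d.2 by rewrite inE r0.
  by rewrite -hc inE => ->.
have hst' : connect (fun x y => adj H' x y || adj Y x y) d.1 d.2.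
  apply: connect_sub (@ga_connects V E H d.1 d.2 p hpath) => x y h; apply: connect1; by rewrite h.
rewrite (kappa_join d.1 d.2 he) hne addn1 add1n ltnS.
apply: IH => //.
- exact: join_eqv.
- apply: join_sub => //; first exact: conn_eqv.
  by move=> u v /heR; apply: connect_sub.
- apply: join_sub => //; first exact: conn_eqv (@adj_sym _ _).
  exact: hdem (mem_head _ _).
Qed.
End Main.

Section Final.
Variable R : realFieldType.
Variable V : finType.

Lemma le_ext_refl (x : option R) : le_ext x x.
Proof. by case: x => //= a; rewrite lexx. Qed.

Lemma le_ext_total (x y : option R) : ~~ le_ext x y -> le_ext y x.
Proof. by case: x; case: y => //= a c; rewrite -ltNge => /ltW. Qed.

Lemma le_ext_trans (x y z : option R) : le_ext x y -> le_ext y z -> le_ext x z.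
Proof. case: x => [a|]; case: y => [c|]; case: z => [d|] //=; exact: le_trans. Qed.

Lemma min_ext_l (x y : option R) : le_ext (min_ext x y) x.
Proof. by rewrite /min_ext; case: ifP => h; [apply: le_ext_refl| apply: le_ext_total; rewrite h]. Qed.

Lemma min_ext_r (x y : option R) : le_ext (min_ext x y) y.
Proof. by rewrite /min_ext; case: ifP => h; [| apply: le_ext_refl]. Qed.

Lemma le_min_ext_seq (s : seq V) (P : pred V) (F : V -> option R) j :
  j \in s -> P j -> le_ext (\big[@min_ext R/None]_(i <- s | P i) F i) (F j).
Proof.
elim: s => // i s IH; rewrite inE big_cons => /orP[/eqP<-|js] Pj.
  by rewrite Pj; apply: min_ext_l.
case: (P i); last exact: IH.
exact: le_ext_trans (min_ext_r _ _) (IH js Pj).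
Qed.

Lemma card_bigcup_le (I : finType) (P : pred I) (F : I -> {set V}) :
  (#|\bigcup_(i | P i) F i| <= \sum_(i | P i) #|F i|)%N.
Proof.
apply: (big_ind2 (fun (S : {set V}) n => #|S| <= n)%N) => //.
- by rewrite cards0.
- move=> S1 n1 S2 n2 h1 h2; apply: leq_trans (leq_card_setU S1 S2) _.
  exact: leq_add.
Qed.

End Final.

Theorem lemma3 (R : realFieldType) (V : finType)
    (E : edges V) (b : bounds R V) (dem : seq (V * V))
    (Hstar : edges V) (ps : seq (seq V)) :
  (* G is a simple undirected graph *)
  (forall e, e \in E -> #|e| = 2%N) ->
  (* finite degree bounds are positive *)
  (forall v c, b v = Some c -> 0 < c) ->
  (* demand endpoints are pairwise distinct vertices *)
  uniq (flatten [seq [:: d.1; d.2] | d <- dem]) ->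
  (* each endpoint has degree one in G and degree bound infinity *)
  (forall d, d \in dem -> forall v, (v == d.1) || (v == d.2) ->
       deg E v = 1%N /\ b v = None) ->
  (* Hstar is an optimal offline solution; OPT = maxload b Hstar *)
  optimal E b dem Hstar ->
  (* Delta > 0 *)
  (if Delta b Hstar is Some d then is_true (0 < d) else True) ->
  (* ps is a run of GA on dem *)
  GA_run E b dem ps ->
  forall r : R, 0 < r ->
    (count (fun tau => r <= tau) (taus b dem ps))%:R
      <= maxload b Hstar * \sum_(v in Gamma b Hstar (H_GA dem ps) r) bval b v.
Proof.
move=> hE2 hpos _ _ [[hHsE hfeas] _] _ hrun r hr.
set Hs := Hstar; set Hf := H_GA dem ps.
set Y : edges V := [set e in Hs | [forall v in e, uload b Hf v < r]].
have YHs : Y \subset Hs by apply/subsetP => e; rewrite inE => /andP[].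
have hY : forall x y, adj Y x y -> [/\ adj E x y, uload b Hf x < r & uload b Hf y < r].
  move=> x y; rewrite /adj inE => /andP[hs /forallP hall]; split.
  - exact: (subsetP hHsE).
  - by move: (hall x); rewrite set21.
  - by move: (hall y); rewrite set22.
have h1 := main_ind hpos hr hY (Hs := Hs) (e := connect (adj Y)) hrun (sub0set _) erefl
  (conn_eqv (@adj_sym _ _)).
have h2 := kappa_add_edges Y (B := Hs :\: Y).
have eqU : Y :|: Hs :\: Y = Hs.
  apply/setP => e; rewrite in_setU in_setD; case hy: (e \in Y) => //=.
  by rewrite (subsetP YHs _ hy).
rewrite eqU in h2.
have hc : (count (fun tau => (r <= tau)%R) (taus b dem ps) <= #|Hs :\: Y|)%N.
  have hA : forall u v, connect (adj Y) u v ->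
      connect (fun x y => adj set0 x y || adj Y x y) u v.
    by apply: connect_sub => x y hxy; apply: connect1; rewrite hxy orbT.
  have hB : forall u v, connect (adj Y) u v -> connect (adj Hs) u v.
    apply: connect_sub => x y hxy; apply: connect1; rewrite /adj.
    exact: (subsetP YHs).
  have hC : forall e, e \in Hs :\: Y -> exists x y, e = [set x; y].
    move=> e; rewrite inE => /andP[_ /(subsetP hHsE)/hE2/eqP/cards2P].
    by case=> x [y [_ ->]]; exists x, y.
  have h3 := leq_trans (h1 hA hB hfeas) (h2 hC).
  by rewrite addnC leq_add2l in h3.
set G := Gamma b Hs Hf r.
have hd : (#|Hs :\: Y| <= \sum_(v in G) deg Hs v)%N.
  apply: leq_trans (card_bigcup_le (fun v => v \in G) (fun v => [set e in Hs | v \in e])).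
  apply: subset_leq_card; apply/subsetP => e; rewrite in_setD => /andP[heY he].
  move: heY; rewrite inE he /= => /forallPn[v].
  rewrite negb_imply -leNgt => /andP[ve hv].
  apply/bigcupP; exists v; last by rewrite inE he ve.
  rewrite inE hv /=; apply: le_min_ext_seq; first exact: mem_index_enum.
  by rewrite /deg card_gt0; apply/set0Pn; exists e; rewrite inE he ve.
apply: le_trans (_ : (\sum_(v in G) deg Hs v)%:R <= _).
  by rewrite ler_nat; apply: leq_trans hc hd.
rewrite natr_sum mulr_sumr; apply: ler_sum => v; rewrite inE => /andP[hv _].
rewrite /bval; move: hv; rewrite /uload; case hb: (b v) => [c|]; last by rewrite leNgt hr.
move=> _; have hc0 := hpos _ _ hb.
rewrite -ler_pdivrMr //.
have := @le_bigmax_seq R V (index_enum V) (fun _ => true) (load b Hs) v (mem_index_enum v) erefl.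
by rewrite /load hb.
Qed.
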